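(* Let $x\in\widetilde X$ and let $\theta\in I^{\mathbb{N}}$ be its itinerary, where $I=\{1,\dots,N\}$. Then \[ p(\theta,n+1)\leqslant p(\theta,n)+\sum_{k=2}^N(k-1)\,\#L_n^k(\theta)\qquad\forall\, n\geqslant 1. \] If moreover $f$ satisfies the separation property, then this inequality is an equality for all $n\geqslant 1$.
   Context: Let $(X,d)$ be a compact metric space, $X_1,\dots,X_N$ ($N\geqslant 2$) non-empty pairwise disjoint open subsets with $X=\bigcup_i\overline{X_i}$, $\Delta:=\{x\in\overline{X_i}\cap\overline{X_j}:i\neq j\}$, and $f:X\to X$ a map such that each $f|_{X_i}$ admits a continuous extension $f_i:\overline{X_i}\to X$. Separation property: each $f_i$ injective and $f_i(\overline{X_i})\cap f_j(\overline{X_j})=\emptyset$ for $i\neq j$. $\widetilde X:=\bigcap_{n\geqslant 0}f^{-n}(X\setminus\Delta)$; the itinerary of $x\in\widetilde X$ is $\theta$ with $\theta_t=i$ iff $f^t(x)\in X_i$. $L_n(\theta):=\{\theta_t\dots\theta_{t+n-1}:t\geqslant 0\}$, $p(\theta,n):=\#L_n(\theta)$. For $A\subset X$ let $F_i(A):=\overline{f(A\cap X_i)}$ and $A_{i_1\dots i_n}:=F_{i_n}\circ\dots\circ F_{i_1}(X)$. For $n\geqslant1$, $k\in I$, \[ L_n^k(\theta):=\{i_1\dots i_n\in L_n(\theta):\#\{j\in I:\exists t\geqslant0 \text{ with } f^{t+n}(x)\in A_{i_1\dots i_n}\cap X_j\}=k\}. \] *)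

(* Defs.v *)
From HB Require Import structures.
From mathcomp Require Import all_boot all_order all_algebra.
From mathcomp Require Import all_classical all_reals all_analysis.
Set Implicit Arguments. Unset Strict Implicit. Unset Printing Implicit Defensive.
Import Order.TTheory GRing.Theory Num.Theory.
Local Open Scope classical_set_scope.

Section Defs.
Context {T : Type} {N : nat} (Xi : 'I_N -> set T) (f : T -> T).

Definition Delta {R : realType} {M : metricType R} (Xs : 'I_N -> set M) : set M :=
  [set y | exists i j : 'I_N, i != j /\ closure (Xs i) y /\ closure (Xs j) y].

Definition word (theta : nat -> 'I_N) (n t : nat) : n.-tuple 'I_N :=
  [tuple theta (t + val i) | i < n].

Definition Lang (theta : nat -> 'I_N) (n : nat) : {set n.-tuple 'I_N} :=
  [set w | `[< exists t : nat, w = word theta n t >]].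

Definition complexity (theta : nat -> 'I_N) (n : nat) : nat := #|Lang theta n|.

End Defs.

Section Defs2.
Context {R : realType} {M : metricType R} {N : nat}
  (Xi : 'I_N -> set M) (f : M -> M).

Definition Xtilde : set M := [set y | forall n : nat, ~ Delta Xi (iter n f y)].

Definition Fop (i : 'I_N) (A : set M) : set M := closure (f @` (A `&` Xi i)).

Definition Aword (w : seq 'I_N) : set M := foldl (fun A i => Fop i A) setT w.

Definition nfollow (x : M) (n : nat) (w : n.-tuple 'I_N) : nat :=
  #|[set j : 'I_N | `[< exists t : nat, (Aword w `&` Xi j) (iter (t + n) f x) >]]|.

Definition Lang_k (x : M) (theta : nat -> 'I_N) (n k : nat) : {set n.-tuple 'I_N} :=
  [set w in Lang theta n | nfollow x w == k].

Definition separation (fe : 'I_N -> M -> M) : Prop :=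
  (forall i, {in closure (Xi i) &, injective (fe i)}) /\
  (forall i j, i != j -> fe i @` closure (Xi i) `&` fe j @` closure (Xi j) = set0).

End Defs2.

(* Main.v *)
Require Import Defs.
From HB Require Import structures.
From mathcomp Require Import all_boot all_order all_algebra.
From mathcomp Require Import all_classical all_reals all_analysis.
Import Order.TTheory GRing.Theory Num.Theory.
Local Open Scope classical_set_scope.

Lemma word_seq N (theta : nat -> 'I_N) n t :
  val (word theta n t) = [seq theta (t + i) | i <- iota 0 n].
Proof.
rewrite -val_enum_ord -map_comp -[LHS](map_tnth_enum (word theta n t)).
by apply: eq_map => i /=; rewrite tnth_mktuple.
Qed.

Lemma Aword_rcons {R : realType} {M : metricType R} {N} (Xi : 'I_N -> set M) f w i :
  Aword Xi f (rcons w i) = Fop Xi f i (Aword Xi f w).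
Proof. by rewrite /Aword foldl_rcons. Qed.

Lemma Aword_closed {R : realType} {M : metricType R} {N} (Xi : 'I_N -> set M) f w :
  closed (Aword Xi f w).
Proof.
case/lastP: w => [|w i]; first exact: closedT.
rewrite Aword_rcons; exact: closed_closure.
Qed.

Lemma Aword_fwd {R : realType} {M : metricType R} {N} (Xi : 'I_N -> set M) f
  (x : M) (theta : nat -> 'I_N)
  (htheta : forall (t : nat) (i : 'I_N), theta t = i <-> Xi i (iter t f x)) t m :
  Aword Xi f [seq theta (t + i) | i <- iota 0 m] (iter (t + m) f x).
Proof.
elim: m => [|m IH]; first by [].
rewrite -addn1 iotaD add0n map_cat cats1 Aword_rcons /Fop.
apply: subset_closure; exists (iter (t + m) f x); last by rewrite addnA addn1.
by split => //; apply/htheta.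
Qed.

Lemma Fop_sub {R : realType} {M : metricType R} {N} (Xi : 'I_N -> set M) f fe
  (hcpt : compact [set: M])
  (hfe_ext : forall i x, Xi i x -> fe i x = f x)
  (hfe_cont : forall i, {within closure (Xi i), continuous (fe i)}) i B :
  Fop Xi f i B `<=` fe i @` closure (B `&` Xi i).
Proof.
have cl : closed (fe i @` closure (B `&` Xi i)).
  apply: compact_closed; first exact: metric_hausdorff.
  apply: continuous_compact.
    apply: continuous_subspaceW (hfe_cont i).
    by apply: closureS => y [].
  apply: subclosed_compact hcpt _ => //; exact: closed_closure.
rewrite /Fop {1}((closure_id _).1 cl); apply: closureS => y [z Bz <-].
exists z; first exact: subset_closure.
by apply: hfe_ext; case: Bz.
Qed.

Lemma Fop_back {R : realType} {M : metricType R} {N} (Xi : 'I_N -> set M) f fe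
  (hcpt : compact [set: M])
  (hfe_ext : forall i x, Xi i x -> fe i x = f x)
  (hfe_cont : forall i, {within closure (Xi i), continuous (fe i)})
  (hsep : separation Xi fe) i j A z :
  closed A -> Xi j z -> Fop Xi f i A (f z) -> j = i /\ A z.
Proof.
move=> clA Xjz /(Fop_sub _ _ _ hcpt hfe_ext hfe_cont) [z' z'cl ez'].
have z'i : closure (Xi i) z' by apply: closureS z'cl => y [].
have zj : closure (Xi j) z by apply: subset_closure.
case: hsep => hinj hdis.
have ji : j = i.
  case: (eqVneq j i) => // /hdis H; exfalso.
  have : (fe j @` closure (Xi j) `&` fe i @` closure (Xi i)) (f z).
    split; first by exists z => //; exact: hfe_ext.
    by exists z'.
  by rewrite H.
subst j; split => //.
have zz : z' = z by apply: (hinj i); rewrite ?inE //; rewrite ez' (hfe_ext _ _ Xjz).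
rewrite ((closure_id _).1 clA) -zz; apply: closureS z'cl; by move=> y [].
Qed.

Lemma Aword_back {R : realType} {M : metricType R} {N} (Xi : 'I_N -> set M) f fe
  (hcpt : compact [set: M])
  (hfe_ext : forall i x, Xi i x -> fe i x = f x)
  (hfe_cont : forall i, {within closure (Xi i), continuous (fe i)})
  (hsep : separation Xi fe)
  (x : M) (theta : nat -> 'I_N)
  (htheta : forall (t : nat) (i : 'I_N), theta t = i <-> Xi i (iter t f x)) w :
  forall m, (size w <= m)%N -> Aword Xi f w (iter m f x) ->
  [seq theta (m - size w + i) | i <- iota 0 (size w)] = w.
Proof.
elim/last_ind: w => [//|w i IH] [|m]; rewrite size_rcons //.
rewrite ltnS => hm; rewrite iterS Aword_rcons.
have Xz : Xi (theta m) (iter m f x) by apply/htheta.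
move=> /(Fop_back _ _ _ hcpt hfe_ext hfe_cont hsep _ _ _ _ (Aword_closed _ _ _) Xz) [ti HA].
rewrite subSS -addn1 iotaD map_cat cats1 (IH _ hm HA) add0n subnK // ti; done.
Qed.

Lemma cardS {N n} (L0 : {set n.-tuple 'I_N}) (F : n.-tuple 'I_N -> set 'I_N) :
  #|[set p : n.-tuple 'I_N * 'I_N | (p.1 \in L0) && (p.2 \in F p.1)]%SET| =
  (\sum_(w in L0) #|F w|)%N.
Proof.
rewrite -sum1_card.
under [RHS]eq_bigr do rewrite -sum1_card.
rewrite pair_big_dep; apply: eq_bigl => p.
by rewrite inE.
Qed.

Lemma perw N K : (1 <= K <= N)%N ->
  (K - 1 = \sum_(2 <= k < N.+1) (K == k) * (k - 1))%N.
Proof.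
case/andP=> h1 h2.
case: (eqVneq K 1) => [->|ne].
  rewrite big1_seq // => k _; by case: eqP => // <-.
have hK : (2 <= K)%N by rewrite ltn_neqAle eq_sym ne h1.
rewrite (bigD1_seq K) ?iota_uniq ?mem_index_iota ?ltnS ?hK ?h2 // eqxx mul1n.
rewrite big1 => [|k]; first by rewrite [RHS]addn0.
by rewrite eq_sym => /negbTE ->.
Qed.

Lemma sumK {N n} (L0 : {set n.-tuple 'I_N}) (K : n.-tuple 'I_N -> nat) :
  (forall w, w \in L0 -> 1 <= K w <= N)%N ->
  (\sum_(w in L0) K w =
   #|L0| + \sum_(2 <= k < N.+1) (k - 1) * #|[set w in L0 | K w == k]%SET|)%N.
Proof.
move=> hK.
rewrite (eq_bigr (fun w => 1 + (K w - 1)))%N; last first.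
  by move=> w /hK /andP[h _]; rewrite subnKC.
rewrite big_split /= sum1_card; congr (_ + _)%N.
rewrite (eq_bigr (fun w => \sum_(2 <= k < N.+1) (K w == k) * (k - 1)))%N; last first.
  by move=> w /hK /perw.
rewrite exchange_big /=; apply: eq_bigr => k _.
rewrite -big_distrl /= mulnC; congr (_ * _)%N.
rewrite -sum1_card (eq_bigl (fun w => (w \in L0) && (K w == k))); last first.
  by move=> w; rewrite inE.
rewrite big_mkcondr /=; apply: eq_bigr => w _; by case: eqP.
Qed.

Definition pre {N n} (u : n.+1.-tuple 'I_N) : n.-tuple 'I_N :=
  [tuple tnth u (widen_ord (leqnSn n) i) | i < n].
Definition pr {N n} (u : n.+1.-tuple 'I_N) := (pre u, tnth u ord_max).

Lemma pr_inj N n : injective (@pr N n).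
Proof.
move=> u v e; have e1 : pre u = pre v := congr1 fst e.
have e2 : tnth u ord_max = tnth v ord_max := congr1 snd e.
apply: eq_from_tnth => i.
case: (ltnP i n) => h.
  have := congr1 (fun w => tnth w (Ordinal h)) e1; rewrite !tnth_mktuple.
  by have -> : widen_ord (leqnSn n) (Ordinal h) = i by apply: val_inj.
have -> : i = ord_max by apply: val_inj => /=; apply/eqP; rewrite eqn_leq h -ltnS ltn_ord.
exact: e2.
Qed.

Lemma pr_word N (theta : nat -> 'I_N) n t :
  pr (word theta n.+1 t) = (word theta n t, theta (t + n)).
Proof.
rewrite /pr /pre; congr pair; last by rewrite tnth_mktuple.
by apply: eq_from_tnth => i; rewrite !tnth_mktuple.
Qed.

Lemma memL N (theta : nat -> 'I_N) n w :
  w \in Lang theta n <-> exists t, w = word theta n t.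
Proof. by rewrite inE; split => /asboolP. Qed.

Theorem lemma4 (R : realType) (M : metricType R) (N : nat) (hN : (2 <= N)%N)
  (Xi : 'I_N -> set M) (f : M -> M) (fe : 'I_N -> M -> M)
  (hcpt : compact [set: M])
  (hne : forall i, Xi i !=set0)
  (hopen : forall i, open (Xi i))
  (hdisj : forall i j, i != j -> Xi i `&` Xi j = set0)
  (hcover : [set: M] = \bigcup_i closure (Xi i))
  (hfe_ext : forall i x, Xi i x -> fe i x = f x)
  (hfe_cont : forall i, {within closure (Xi i), continuous (fe i)})
  (x : M) (hx : Xtilde Xi f x)
  (theta : nat -> 'I_N)
  (htheta : forall (t : nat) (i : 'I_N), theta t = i <-> Xi i (iter t f x)) :
  (forall n : nat, (1 <= n)%N ->
     (complexity theta n.+1 <=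
      complexity theta n + \sum_(2 <= k < N.+1) (k - 1) * #|Lang_k Xi f x theta n k|)%N)
  /\
  (separation Xi fe ->
   forall n : nat, (1 <= n)%N ->
     complexity theta n.+1 =
      (complexity theta n + \sum_(2 <= k < N.+1) (k - 1) * #|Lang_k Xi f x theta n k|)%N).
Proof.
pose F n (w : n.-tuple 'I_N) : set 'I_N :=
  [set j | `[< exists t : nat, (Aword Xi f w `&` Xi j) (iter (t + n) f x) >]].
have memF n (w : n.-tuple 'I_N) j :
    j \in F n w <-> exists t : nat, (Aword Xi f w `&` Xi j) (iter (t + n) f x).
  by rewrite in_setE; split => /asboolP.
pose S n := [set p : n.-tuple 'I_N * 'I_N |
   (p.1 \in Lang theta n) && (p.2 \in F n p.1)]%SET.
have sub1 n : [set pr u | u in Lang theta n.+1]%SET \subset S n.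
  apply/fintype.subsetP => p /imsetP [u /memL [t ->] ->]; rewrite pr_word inE /=.
  apply/andP; split; first by apply/memL; exists t.
  apply/memF; exists t; split; last by apply/htheta.
  rewrite word_seq; exact: Aword_fwd.
have sumS n : #|S n| =
    (complexity theta n + \sum_(2 <= k < N.+1) (k - 1) * #|Lang_k Xi f x theta n k|)%N.
  rewrite cardS (@sumK _ _ _ (fun w => nfollow Xi f x w)) //.
  move=> w /memL [t ->]; apply/andP; split.
    apply/card_gt0P; exists (theta (t + n)); apply/memF; exists t.
    split; last by apply/htheta.
    rewrite word_seq; exact: Aword_fwd.
  by rewrite -[X in (_ <= X)%N]card_ord max_card.
split.
  move=> n _; rewrite -sumS /complexity -(card_imset _ (@pr_inj N n)).
  exact: subset_leq_card.
move=> hsep n _; rewrite -sumS /complexity -(card_imset _ (@pr_inj N n)).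
apply/eqP; rewrite eqn_leq subset_leq_card //=.
apply/subset_leq_card/fintype.subsetP => -[w j]; rewrite inE /= => /andP[/memL [t ->] /memF [t' [HA Hj]]].
apply/imsetP; exists (word theta n.+1 t'); first by apply/memL; exists t'.
rewrite pr_word; congr pair; last by symmetry; apply/htheta.
apply: val_inj; rewrite [RHS]word_seq.
have := Aword_back _ _ _ hcpt hfe_ext hfe_cont hsep x theta htheta (val (word theta n t)) (t' + n).
rewrite size_tuple addnK => <- //; exact: leq_addl.
Qed.
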